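(* Let $G$ be a finitely generated nilpotent group. There are first-order formulas in the language of groups which, in every group $H\equiv G$, define the subgroups $M(H)=Is(H'\cdot Z(H))$ and $N(H)=Is(H')\cdot Z(H)$ respectively. In particular the finite abelian quotient $Is(G'Z(G))/(Is(G')Z(G))$ is interpretable in $G$ uniformly with respect to $Th(G)$.
   Context: $Is(N)=\{x\in H:\ x^k\in N\text{ for some integer }k\ge1\}$; $Z(H)$ is the center and $H'$ the commutator subgroup. A structure is interpretable in $G$ uniformly with respect to $Th(G)$ if a single fixed system of formulas interprets the corresponding structure in every model of $Th(G)$. *)

(* Defs.v *)
From Stdlib Require Import Arith List.

Set Implicit Arguments.

Record group := Group {
  car :> Type;
  gmul : car -> car -> car;
  ginv : car -> car;
  gone : car;
  gassoc : forall x y z, gmul x (gmul y z) = gmul (gmul x y) z;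
  gmul1l : forall x, gmul gone x = x;
  gmulVl : forall x, gmul (ginv x) x = gone
}.

Arguments gmul {g} _ _.
Arguments ginv {g} _.
Arguments gone {g}.

Inductive term :=
| tvar (n : nat)
| tone
| tmul (t u : term)
| tinv (t : term).

Inductive formula :=
| feq (t u : term)
| fbot
| fimp (p q : formula)
| fand (p q : formula)
| f_or (p q : formula)
| fall (v : nat) (p : formula)
| fex (v : nat) (p : formula).

Fixpoint teval (G : group) (e : nat -> G) (t : term) : G :=
  match t with
  | tvar n => e n
  | tone => gone
  | tmul a b => gmul (teval G e a) (teval G e b)
  | tinv a => ginv (teval G e a)
  end.

Definition upd (G : group) (e : nat -> G) (v : nat) (a : G) : nat -> G :=
  fun n => if Nat.eqb n v then a else e n.

Fixpoint sat (G : group) (e : nat -> G) (p : formula) : Prop :=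
  match p with
  | feq t u => teval G e t = teval G e u
  | fbot => False
  | fimp a b => sat G e a -> sat G e b
  | fand a b => sat G e a /\ sat G e b
  | f_or a b => sat G e a \/ sat G e b
  | fall v a => forall x : G, sat G (upd G e v x) a
  | fex v a => exists x : G, sat G (upd G e v x) a
  end.

Arguments teval {G} e t.
Arguments upd {G} e v a _.
Arguments sat {G} e p.

Fixpoint tfree (t : term) (v : nat) : bool :=
  match t with
  | tvar n => Nat.eqb n v
  | tone => false
  | tmul a b => tfree a v || tfree b v
  | tinv a => tfree a v
  end.

Fixpoint ffree (p : formula) (v : nat) : bool :=
  match p with
  | feq t u => tfree t v || tfree u v
  | fbot => false
  | fimp a b | fand a b | f_or a b => ffree a v || ffree b v
  | fall w a | fex w a => negb (Nat.eqb w v) && ffree a v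
  end.

Definition fv_below (k : nat) (p : formula) : Prop :=
  forall v, ffree p v = true -> v < k.

Definition sentence (p : formula) : Prop := fv_below 0 p.

Definition elem_equiv (G H : group) : Prop :=
  forall p, sentence p ->
    (sat (fun _ => @gone G) p <-> sat (fun _ => @gone H) p).

Definition env3 (G : group) (a b c : G) : nat -> G :=
  fun n => match n with 0 => a | 1 => b | _ => c end.
Arguments env3 {G} a b c _.

Inductive gen (G : group) (S : G -> Prop) : G -> Prop :=
| gen_in x : S x -> gen G S x
| gen_one : gen G S gone
| gen_mul x y : gen G S x -> gen G S y -> gen G S (gmul x y)
| gen_inv x : gen G S x -> gen G S (ginv x).
Arguments gen {G} S _.

Definition comm (G : group) (x y : G) : G :=
  gmul (gmul (ginv x) (ginv y)) (gmul x y).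

Arguments comm {G} x y.

Fixpoint gpow (G : group) (x : G) (k : nat) : G :=
  match k with 0 => gone | S k => gmul x (gpow G x k) end.
Arguments gpow {G} x k.

Definition derived (G : group) : G -> Prop :=
  gen (fun z => exists x y : G, z = comm x y).

Definition center (G : group) (z : G) : Prop := forall x : G, gmul z x = gmul x z.

Definition prodset (G : group) (A B : G -> Prop) (z : G) : Prop :=
  exists a b, A a /\ B b /\ z = gmul a b.
Arguments prodset {G} A B z.

Definition Is (G : group) (A : G -> Prop) (x : G) : Prop :=
  exists k, 1 <= k /\ A (gpow x k).
Arguments Is {G} A x.

Definition MIs (G : group) : G -> Prop := Is (prodset (@derived G) (@center G)).
Definition NIs (G : group) : G -> Prop := prodset (Is (@derived G)) (@center G).

(** Lower central series: gamma k = γ_{k+1}(G). *)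
Fixpoint gamma (G : group) (k : nat) : G -> Prop :=
  match k with
  | 0 => fun _ => True
  | S k => gen (fun z => exists x y : G, gamma G k y /\ z = comm x y)
  end.

Definition nilpotent (G : group) : Prop :=
  exists c, forall x : G, gamma G c x -> x = gone.

Definition fin_gen (G : group) : Prop :=
  exists (gens : nat -> G) (n : nat),
    forall x : G, gen (fun z => exists i, i < n /\ z = gens i) x.

(* Main.v *)
Require Import Defs.
From Stdlib Require Import Arith List Lia ZArith Bool.
From Stdlib Require Import Classical FunctionalExtensionality PropExtensionality ProofIrrelevance ClassicalEpsilon.

Notation "x ** y" := (gmul x y) (at level 40, left associativity).

Section Basics.
Context {G : group}.
Implicit Types x y z : G.

Lemma assocR x y z : (x ** y) ** z = x ** (y ** z).
Proof. rewrite gassoc; reflexivity. Qed.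
Lemma mul1 x : gone ** x = x. Proof. apply (gmul1l G). Qed.
Lemma mulVx x : ginv x ** x = gone. Proof. apply (gmulVl G). Qed.
Lemma mulKl x y : ginv x ** (x ** y) = y.
Proof. rewrite gassoc, mulVx, mul1; reflexivity. Qed.
Lemma mulxV x : x ** ginv x = gone.
Proof.
  rewrite <- (mul1 (x ** ginv x)).
  rewrite <- (mulVx (ginv x)) at 1.
  rewrite assocR, (gassoc _ (ginv x) x), mulVx, mul1, mulVx. reflexivity.
Qed.
Lemma mulx1 x : x ** gone = x.
Proof. rewrite <- (mulVx x), gassoc, mulxV, mul1; reflexivity. Qed.
Lemma mulKr x y : x ** (ginv x ** y) = y.
Proof. rewrite gassoc, mulxV, mul1; reflexivity. Qed.
Lemma mul_cancel_l x y z : x ** y = x ** z -> y = z.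
Proof. intro H. rewrite <- (mulKl x y), H, mulKl. reflexivity. Qed.
Lemma inv_uniq x y : x ** y = gone -> ginv x = y.
Proof. intro H. apply (mul_cancel_l x). rewrite mulxV, H. reflexivity. Qed.
Lemma invinv x : ginv (ginv x) = x.
Proof. apply inv_uniq. apply mulVx. Qed.
Lemma invmul x y : ginv (x ** y) = ginv y ** ginv x.
Proof. apply inv_uniq. rewrite assocR, (gassoc _ y), mulxV, mul1, mulxV. reflexivity. Qed.
Lemma inv1 : ginv (@gone G) = gone.
Proof. apply inv_uniq. apply mul1. Qed.
End Basics.

Ltac gsimpl := repeat (rewrite ?invmul, ?invinv, ?inv1, ?mul1, ?mulx1, ?assocR, ?mulVx, ?mulxV, ?mulKl, ?mulKr).
Ltac gsolve := gsimpl; reflexivity.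

Section Pow.
Context {G : group}.
Implicit Types x y z : G.
Lemma gpow_add x a b : gpow x (a + b) = gpow x a ** gpow x b.
Proof. induction a; simpl. gsolve. rewrite IHa. gsolve. Qed.
Lemma gpow_1 x : gpow x 1 = x. Proof. simpl. gsolve. Qed.
Lemma gpow_one k : gpow (@gone G) k = gone.
Proof. induction k; simpl; [reflexivity|rewrite IHk; gsolve]. Qed.
Lemma gpow_mulr x a b : gpow x (a * b) = gpow (gpow x a) b.
Proof.
  revert a. induction b; intro a.
  - rewrite Nat.mul_0_r. reflexivity.
  - rewrite Nat.mul_succ_r, Nat.add_comm, gpow_add, IHb. simpl. reflexivity.
Qed.
Lemma gpow_comm x k : x ** gpow x k = gpow x k ** x.
Proof.
  replace (x ** gpow x k) with (gpow x (1 + k)) by (simpl; gsolve).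
  rewrite Nat.add_comm, gpow_add, gpow_1. reflexivity.
Qed.
Lemma gpow_Sr x k : gpow x (S k) = gpow x k ** x.
Proof. simpl. apply gpow_comm. Qed.
Lemma gpow_conj g x k : gpow (ginv g ** x ** g) k = ginv g ** gpow x k ** g.
Proof. induction k; simpl. gsolve. rewrite IHk. gsolve. Qed.
Lemma gpow_inv x k : gpow (ginv x) k = ginv (gpow x k).
Proof.
  induction k; simpl. rewrite inv1; reflexivity.
  rewrite IHk, gpow_comm, invmul. reflexivity.
Qed.
Lemma gpow_commute x y k : x ** y = y ** x -> gpow (x ** y) k = gpow x k ** gpow y k.
Proof.
  intro Hc. assert (Hy : forall j, y ** gpow x j = gpow x j ** y).
  { induction j; simpl. gsolve. rewrite <- assocR, <- Hc, assocR, IHj. gsolve. }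
  induction k; simpl. gsolve. rewrite IHk. gsimpl. f_equal.
  rewrite <- !assocR. f_equal. apply Hy.
Qed.
End Pow.

Fixpoint prodn {G : group} (f : nat -> G) (n : nat) : G :=
  match n with 0 => gone | S n => prodn f n ** f n end.

Section Prod.
Context {G : group}.
Implicit Types x y z : G.
Lemma prodn_ext (f g : nat -> G) n : (forall i, i < n -> f i = g i) -> prodn f n = prodn g n.
Proof. induction n; intro H; simpl; [reflexivity|]. rewrite IHn by (intros; apply H; lia). rewrite H by lia. reflexivity. Qed.
Lemma prodn_add (f : nat -> G) n k : prodn f (n + k) = prodn f n ** prodn (fun i => f (n + i)) k.
Proof. induction k; simpl. rewrite Nat.add_0_r; gsolve. rewrite Nat.add_succ_r. simpl. rewrite IHk. gsolve. Qed.
Lemma prodn_Sl (f : nat -> G) n : prodn f (S n) = f 0 ** prodn (fun i => f (S i)) n.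
Proof. replace (S n) with (1 + n) by lia. rewrite prodn_add. simpl. gsolve. Qed.
Lemma prodn_one (f : nat -> G) n : (forall i, i < n -> f i = gone) -> prodn f n = gone.
Proof. induction n; intro H; simpl; [reflexivity|]. rewrite IHn, H by (intros; try apply H; lia). gsolve. Qed.
Lemma prodn_inv (f : nat -> G) n : ginv (prodn f n) = prodn (fun i => ginv (f (n - 1 - i))) n.
Proof.
  induction n. simpl; apply inv1.
  rewrite (prodn_Sl (fun i => ginv (f (S n - 1 - i)))). change (prodn f (S n)) with (prodn f n ** f n).
  rewrite invmul, IHn. f_equal. f_equal. f_equal. lia.
  apply prodn_ext. intros i Hi. f_equal. f_equal. lia.
Qed.
End Prod.

Lemma comm_inv {G : group} (x y : G) : ginv (comm x y) = comm y x.
Proof. unfold comm. gsolve. Qed.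
Lemma comm_1l {G : group} (y : G) : comm gone y = gone.
Proof. unfold comm. gsolve. Qed.
Lemma comm_1r {G : group} (y : G) : comm y gone = gone.
Proof. unfold comm. gsolve. Qed.
Lemma comm_conj {G : group} (x y g : G) :
  ginv g ** comm x y ** g = comm (ginv g ** x ** g) (ginv g ** y ** g).
Proof. unfold comm. gsolve. Qed.

Definition subgroup {G : group} (S : G -> Prop) : Prop :=
  S gone /\ (forall x y, S x -> S y -> S (x ** y)) /\ (forall x, S x -> S (ginv x)).

Lemma gen_subgroup {G : group} (S : G -> Prop) : subgroup (gen S).
Proof. split; [apply gen_one|split; [apply gen_mul|apply gen_inv]]. Qed.

Lemma gen_least {G : group} (S T : G -> Prop) : subgroup T -> (forall x, S x -> T x) -> forall x, gen S x -> T x.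
Proof. intros [H1 [Hm Hi]] HST x Hx. induction Hx; auto. Qed.

Lemma gen_mono {G : group} (S T : G -> Prop) : (forall x, S x -> T x) -> forall x, gen S x -> gen T x.
Proof. intros H. apply gen_least. apply gen_subgroup. intros; apply gen_in; auto. Qed.

Lemma subgroup_gpow {G : group} (S : G -> Prop) x k : subgroup S -> S x -> S (gpow x k).
Proof. intros [H1 [Hm Hi]] Hx. induction k; simpl; auto. Qed.

Lemma subgroup_prodn {G : group} (S : G -> Prop) f n : subgroup S -> (forall i, i < n -> S (f i)) -> S (prodn f n).
Proof. intros HS. destruct HS as [H1 [Hm Hi]]. induction n; intro H; simpl; auto. apply Hm; auto. Qed.

Lemma gamma_subgroup {G : group} k : subgroup (gamma G k).
Proof. destruct k; simpl. split; [exact I|split; auto]. apply gen_subgroup. Qed.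

Lemma gamma_normal {G : group} k : forall x g, gamma G k x -> gamma G k (ginv g ** x ** g).
Proof.
  induction k; intros x g Hx; simpl in *; [exact I|].
  induction Hx as [z Hz| |a b _ IHa _ IHb|a _ IHa].
  - destruct Hz as [u [v [Hv ->]]]. apply gen_in. rewrite comm_conj.
    exists (ginv g ** u ** g), (ginv g ** v ** g). split; auto.
  - replace (ginv g ** gone ** g) with (@gone G) by gsolve. apply gen_one.
  - replace (ginv g ** (a ** b) ** g) with ((ginv g ** a ** g) ** (ginv g ** b ** g)) by gsolve.
    apply gen_mul; auto.
  - replace (ginv g ** ginv a ** g) with (ginv (ginv g ** a ** g)) by gsolve. apply gen_inv; auto.
Qed.

Lemma gamma_dec {G : group} k x : gamma G (S k) x -> gamma G k x.
Proof.
  intro Hx. simpl in Hx. destruct (gamma_subgroup (G:=G) k) as [H1 [Hm Hi]].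
  induction Hx as [z Hz| |a b _ IHa _ IHb|a _ IHa]; auto.
  destruct Hz as [u [v [Hv ->]]]. unfold comm.
  replace (ginv u ** ginv v ** (u ** v)) with ((ginv u ** ginv v ** u) ** v) by gsolve.
  apply Hm; auto. apply gamma_normal. apply Hi. auto.
Qed.

Lemma gamma_anti {G : group} j k x : j <= k -> gamma G k x -> gamma G j x.
Proof. induction 1; auto. intro Hg. apply IHle. apply gamma_dec. auto. Qed.

Lemma gamma_one {G : group} k : gamma G k gone.
Proof. apply gamma_subgroup. Qed.
Lemma gamma_mul {G : group} k (a b : G) : gamma G k a -> gamma G k b -> gamma G k (a ** b).
Proof. apply gamma_subgroup. Qed.
Lemma gamma_inv {G : group} k (a : G) : gamma G k a -> gamma G k (ginv a).
Proof. apply gamma_subgroup. Qed.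

Section Level.
Context {G : group} (k : nat).
Local Notation N := (gamma G (S (S k))).
Local Notation C := (gamma G (S k)).
Local Notation Y := (gamma G k).
Definition eqvN (a b : G) := gamma G (S (S k)) (ginv a ** b).

Let NS := gamma_subgroup (G:=G) (S (S k)).

Lemma eqvN_refl a : eqvN a a.
Proof. unfold eqvN. rewrite mulVx. apply NS. Qed.
Lemma eqvN_sym a b : eqvN a b -> eqvN b a.
Proof. unfold eqvN. intro H. replace (ginv b ** a) with (ginv (ginv a ** b)) by gsolve. apply NS; auto. Qed.
Lemma eqvN_trans a b c : eqvN a b -> eqvN b c -> eqvN a c.
Proof. unfold eqvN. intros H1 H2. replace (ginv a ** c) with ((ginv a ** b) ** (ginv b ** c)) by gsolve. apply NS; auto. Qed.
Lemma eqvN_mul a a' b b' : eqvN a a' -> eqvN b b' -> eqvN (a ** b) (a' ** b').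
Proof.
  unfold eqvN. intros H1 H2.
  replace (ginv (a ** b) ** (a' ** b')) with ((ginv b ** (ginv a ** a') ** b) ** (ginv b ** b')) by gsolve.
  apply NS; auto. apply gamma_normal. auto.
Qed.
Lemma eqvN_inv a a' : eqvN a a' -> eqvN (ginv a) (ginv a').
Proof.
  unfold eqvN. intros H.
  replace (ginv (ginv a) ** ginv a') with (ginv (ginv a) ** ginv (ginv a ** a') ** ginv a) by gsolve.
  apply gamma_normal. apply NS. auto.
Qed.
Lemma eqvN_central c g : C c -> eqvN (c ** g) (g ** c).
Proof.
  intro Hc. unfold eqvN. replace (ginv (c ** g) ** (g ** c)) with (comm g c) by (unfold comm; gsolve).
  simpl. apply gen_in. exists g, c. split; auto.
Qed.
Lemma eqvN_conj c g : C c -> eqvN (ginv g ** c ** g) c.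
Proof.
  intro Hc. apply (eqvN_trans _ (ginv g ** (g ** c))).
  rewrite assocR. apply eqvN_mul. apply eqvN_refl. apply eqvN_central; auto.
  rewrite mulKl. apply eqvN_refl.
Qed.
Lemma C_sub : subgroup C.
Proof. apply gamma_subgroup. Qed.

Lemma prodn_mul_central (f g : nat -> G) n :
  (forall i, C (f i)) -> (forall i, C (g i)) ->
  eqvN (prodn f n ** prodn g n) (prodn (fun i => f i ** g i) n).
Proof.
  intros Hf Hg. induction n; simpl.
  - rewrite mul1. apply eqvN_refl.
  - apply (eqvN_trans _ ((prodn f n ** prodn g n) ** (f n ** g n))).
    + replace (prodn f n ** f n ** (prodn g n ** g n)) with (prodn f n ** (f n ** prodn g n) ** g n) by gsolve.
      replace (prodn f n ** prodn g n ** (f n ** g n)) with (prodn f n ** (prodn g n ** f n) ** g n) by gsolve.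
      apply eqvN_mul; [|apply eqvN_refl]. apply eqvN_mul; [apply eqvN_refl|]. apply eqvN_central; auto.
    + apply eqvN_mul; [auto|apply eqvN_refl].
Qed.

Lemma prodn_inv_central (f : nat -> G) n :
  (forall i, C (f i)) -> eqvN (ginv (prodn f n)) (prodn (fun i => ginv (f i)) n).
Proof.
  intros Hf. induction n; simpl.
  - rewrite inv1. apply eqvN_refl.
  - rewrite invmul. apply (eqvN_trans _ (ginv (prodn f n) ** ginv (f n))).
    + apply eqvN_central. apply gamma_inv. apply Hf.
    + apply eqvN_mul; [auto|apply eqvN_refl].
Qed.

Context (x : nat -> G) (n : nat).
Hypothesis Hgen : forall g : G, gen (fun z => exists i, i < n /\ z = x i) g.

Definition Pk (g : G) := exists y : nat -> G, (forall i, Y (y i)) /\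
   eqvN (prodn (fun i => comm (x i) (y i)) n) g.

Lemma commC a b : Y b -> C (comm a b).
Proof. intro Hb. simpl. apply gen_in. exists a, b. auto. Qed.

Lemma Pk_resp a b : Pk a -> eqvN a b -> Pk b.
Proof. intros [y [Hy H]] Hab. exists y. split; auto. eapply eqvN_trans; eauto. Qed.

Lemma Pk_one : Pk gone.
Proof.
  exists (fun _ => gone). split. intros; apply gamma_one.
  rewrite prodn_one. apply eqvN_refl. intros; apply comm_1r.
Qed.

Lemma Pk_mul a b : Pk a -> Pk b -> Pk (a ** b).
Proof.
  intros [y [Hy Ha]] [y' [Hy' Hb]].
  exists (fun i => y' i ** y i). split. intro i. apply gamma_mul; auto.
  apply (eqvN_trans _ (prodn (fun i => comm (x i) (y i)) n ** prodn (fun i => comm (x i) (y' i)) n)).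
  2: apply eqvN_mul; auto.
  apply eqvN_sym. apply (eqvN_trans _ (prodn (fun i => comm (x i) (y i) ** comm (x i) (y' i)) n)).
  apply prodn_mul_central; intros; apply commC; auto.
  clear Ha Hb Hgen. induction n as [|m IH]; simpl. apply eqvN_refl.
  apply eqvN_mul. apply IH.
  replace (comm (x m) (y' m ** y m)) with (comm (x m) (y m) ** (ginv (y m) ** comm (x m) (y' m) ** y m))
    by (unfold comm; gsolve).
  apply eqvN_mul. apply eqvN_refl. apply eqvN_sym. apply eqvN_conj. apply commC; auto.
Qed.

Lemma Pk_inv a : Pk a -> Pk (ginv a).
Proof.
  intros [y [Hy Ha]].
  exists (fun i => ginv (y i)). split. intro i. apply gamma_inv; auto.
  apply (eqvN_trans _ (ginv (prodn (fun i => comm (x i) (y i)) n))).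
  2: apply eqvN_inv; auto.
  apply eqvN_sym. apply (eqvN_trans _ (prodn (fun i => ginv (comm (x i) (y i))) n)).
  apply prodn_inv_central; intros; apply commC; auto.
  clear Ha Hgen. induction n as [|m IH]; simpl. apply eqvN_refl.
  apply eqvN_mul. apply IH.
  replace (comm (x m) (ginv (y m))) with (ginv (ginv (y m)) ** ginv (comm (x m) (y m)) ** ginv (y m))
    by (unfold comm; gsolve).
  apply eqvN_sym. apply eqvN_conj. apply gamma_inv. apply commC; auto.
Qed.

Lemma prodn_single (f : nat -> G) m i : i < m -> (forall j, j <> i -> f j = gone) -> prodn f m = f i.
Proof.
  induction m; intros Hi Hf. lia. simpl.
  destruct (Nat.eq_dec i m) as [->|Hne].
  - rewrite prodn_one. gsolve. intros j Hj. apply Hf. lia.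
  - rewrite IHm by (auto; lia). rewrite (Hf m) by lia. gsolve.
Qed.

Lemma Pk_gen a b : Y b -> Pk (comm a b).
Proof.
  intros Hb. generalize (Hgen a). clear Hgen. intro Ha.
  induction Ha as [z Hz| |a1 a2 _ IH1 _ IH2|a1 _ IH1].
  - destruct Hz as [i [Hi ->]].
    exists (fun j => if Nat.eqb j i then b else gone). split.
    + intro j. destruct (Nat.eqb j i); auto. apply gamma_one.
    + rewrite (prodn_single _ _ i Hi). rewrite Nat.eqb_refl. apply eqvN_refl.
      intros j Hj. apply Nat.eqb_neq in Hj. rewrite Hj. apply comm_1r.
  - rewrite comm_1l. apply Pk_one.
  - apply (Pk_resp (comm a1 b ** comm a2 b)). apply Pk_mul; auto.
    replace (comm (a1 ** a2) b) with ((ginv a2 ** comm a1 b ** a2) ** comm a2 b) by (unfold comm; gsolve).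
    apply eqvN_mul. apply eqvN_sym. apply eqvN_conj. apply commC; auto. apply eqvN_refl.
  - apply (Pk_resp (ginv (comm a1 b))). apply Pk_inv; auto.
    replace (comm (ginv a1) b) with (ginv (ginv a1) ** ginv (comm a1 b) ** ginv a1) by (unfold comm; gsolve).
    apply eqvN_sym. apply eqvN_conj. apply gamma_inv. apply commC; auto.
Qed.

Lemma Pk_all g : C g -> Pk g.
Proof.
  intro Hg. unfold C in Hg. simpl in Hg.
  apply (gen_least _ Pk) in Hg; auto.
  split; [apply Pk_one|split; [apply Pk_mul|apply Pk_inv]].
  intros z [u [v [Hv ->]]]. apply Pk_gen; auto.
Qed.

End Level.

Definition PC {G : group} (m : nat) (g : G) :=
  exists a b : nat -> G, g = prodn (fun i => comm (a i) (b i)) m.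

Lemma PC_mul {G : group} m1 m2 (g1 g2 : G) : PC m1 g1 -> PC m2 g2 -> PC (m1 + m2) (g1 ** g2).
Proof.
  intros [a [b ->]] [a' [b' ->]].
  exists (fun i => if Nat.ltb i m1 then a i else a' (i - m1)),
         (fun i => if Nat.ltb i m1 then b i else b' (i - m1)).
  rewrite prodn_add. f_equal.
  - apply prodn_ext. intros i Hi. apply Nat.ltb_lt in Hi. rewrite Hi. reflexivity.
  - apply prodn_ext. intros i Hi. assert (Nat.ltb (m1 + i) m1 = false) as E by (apply Nat.ltb_ge; lia).
    rewrite E. f_equal; f_equal; lia.
Qed.

Lemma PC_zero {G : group} : PC 0 (@gone G).
Proof. exists (fun _ => gone), (fun _ => gone). reflexivity. Qed.

Lemma width_thm (G : group) : fin_gen G -> nilpotent G ->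
  exists m, forall g : G, derived G g -> PC m g.
Proof.
  intros [x [n Hgen]] [c Hc].
  assert (Hd : forall t j g, c <= S j + t -> gamma G (S j) g -> PC (n * t) g).
  { induction t; intros j g Hle Hg.
    - rewrite Nat.mul_0_r. rewrite (Hc g). apply PC_zero. apply (gamma_anti _ (S j)); auto. lia.
    - destruct (Pk_all j x n Hgen g Hg) as [y [Hy He]].
      unfold eqvN in He.
      replace g with (prodn (fun i => comm (x i) (y i)) n ** (ginv (prodn (fun i => comm (x i) (y i)) n) ** g)) by gsolve.
      replace (n * S t) with (n + n * t) by lia.
      apply PC_mul. exists x, y. reflexivity.
      apply (IHt (S j)); [lia|auto]. }
  exists (n * c). intros g Hg. apply (Hd c 0). lia.
  simpl. unfold derived in Hg. revert Hg. apply gen_mono. intros z [u [v ->]]. exists u, v. split; auto.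
Qed.

Definition zpow {G : group} (x : G) (z : Z) : G :=
  match z with Z0 => gone | Zpos p => gpow x (Pos.to_nat p) | Zneg p => ginv (gpow x (Pos.to_nat p)) end.

Section Zpow.
Context {G : group}.
Implicit Types x y : G.

Lemma zpow_of_nat x k : zpow x (Z.of_nat k) = gpow x k.
Proof. destruct k; simpl. reflexivity. rewrite SuccNat2Pos.id_succ. reflexivity. Qed.
Lemma zpow_neg_nat x k : zpow x (- Z.of_nat k) = ginv (gpow x k).
Proof. destruct k; simpl. rewrite inv1; reflexivity. rewrite SuccNat2Pos.id_succ. reflexivity. Qed.
Lemma zpow_opp x z : zpow x (- z) = ginv (zpow x z).
Proof. destruct z; simpl. rewrite inv1; reflexivity. reflexivity. rewrite invinv; reflexivity. Qed.
Lemma gpow_comm2 x a b : gpow x a ** gpow x b = gpow x b ** gpow x a.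
Proof. rewrite <- !gpow_add, Nat.add_comm. reflexivity. Qed.
Lemma gpow_comm2i x a b : ginv (gpow x a) ** gpow x b = gpow x b ** ginv (gpow x a).
Proof.
  apply (mul_cancel_l (gpow x a)). rewrite mulKr.
  rewrite <- assocR, gpow_comm2, assocR, mulxV, mulx1. reflexivity.
Qed.
Lemma zpow_sub_nat x a b : zpow x (Z.of_nat a - Z.of_nat b) = gpow x a ** ginv (gpow x b).
Proof.
  destruct (le_lt_dec b a) as [H|H].
  - replace (Z.of_nat a - Z.of_nat b)%Z with (Z.of_nat (a - b)) by lia.
    rewrite zpow_of_nat. replace a with (b + (a - b)) at 2 by lia.
    rewrite gpow_add, gpow_comm2. gsolve.
  - replace (Z.of_nat a - Z.of_nat b)%Z with (- Z.of_nat (b - a))%Z by lia.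
    rewrite zpow_neg_nat. replace b with (a + (b - a)) at 2 by lia.
    rewrite gpow_add. gsimpl. rewrite <- assocR, <- gpow_comm2i. gsolve.
Qed.
Lemma zpow_repr x z : zpow x z = zpow x (Z.of_nat (Z.to_nat z) - Z.of_nat (Z.to_nat (- z))).
Proof. f_equal. lia. Qed.
Lemma zpow_add x z1 z2 : zpow x (z1 + z2) = zpow x z1 ** zpow x z2.
Proof.
  rewrite (zpow_repr x (z1 + z2)), (zpow_repr x z1), (zpow_repr x z2).
  set (a1 := Z.to_nat z1). set (b1 := Z.to_nat (- z1)).
  set (a2 := Z.to_nat z2). set (b2 := Z.to_nat (- z2)).
  replace (Z.of_nat (Z.to_nat (z1 + z2)) - Z.of_nat (Z.to_nat (- (z1 + z2))))%Z
    with (Z.of_nat (a1 + a2) - Z.of_nat (b1 + b2))%Z by (unfold a1, b1, a2, b2; lia).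
  rewrite !zpow_sub_nat, !gpow_add. gsimpl. f_equal.
  rewrite (gassoc _ (ginv (gpow x b1))), gpow_comm2i, assocR. f_equal.
  rewrite <- !invmul, gpow_comm2. reflexivity.
Qed.
Lemma zpow_cases x z : exists a, zpow x z = gpow x a \/ zpow x z = ginv (gpow x a).
Proof. destruct z; simpl. exists 0; left; reflexivity. eexists; left; reflexivity. eexists; right; reflexivity. Qed.
End Zpow.

Definition torsion {G : group} (t : G) := exists k, 1 <= k /\ gpow t k = gone.

Lemma exponent_list {G : group} (L : list G) :
  exists e, 1 <= e /\ forall t, In t L -> torsion t -> gpow t e = gone.
Proof.
  induction L as [|a L [e [He H]]].
  - exists 1. split; auto. intros t [].
  - destruct (classic (torsion a)) as [[k [Hk Ha]]|Hna].
    + exists (k * e). split. nia. intros t [<-|Ht] Htt.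
      * rewrite gpow_mulr, Ha, gpow_one. reflexivity.
      * rewrite Nat.mul_comm, gpow_mulr, H, gpow_one; auto.
    + exists e. split; auto. intros t [<-|Ht] Htt; [contradiction|auto].
Qed.

Section Abelian.
Context {A : group} (Hab : forall x y : A, x ** y = y ** x).

Lemma gpow_mul_ab (x y : A) k : gpow (x ** y) k = gpow x k ** gpow y k.
Proof. apply gpow_commute, Hab. Qed.

Lemma torsion_mul (x y : A) : torsion x -> torsion y -> torsion (x ** y).
Proof.
  intros [k [Hk Hx]] [l [Hl Hy]]. exists (k * l). split. nia.
  rewrite gpow_mul_ab. rewrite gpow_mulr, Hx, gpow_one. rewrite Nat.mul_comm, gpow_mulr, Hy, gpow_one. gsolve.
Qed.
Lemma torsion_inv (x : A) : torsion x -> torsion (ginv x).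
Proof. intros [k [Hk Hx]]. exists k. split; auto. rewrite gpow_inv, Hx, inv1. reflexivity. Qed.

Definition genn (g : nat -> A) n := gen (fun z => exists i, i < n /\ z = g i).

Lemma decomp (g : nat -> A) n t : genn g (S n) t ->
  exists z b, genn g n b /\ t = zpow (g n) z ** b.
Proof.
  induction 1 as [z Hz| |a b _ [z1 [b1 [H1 ->]]] _ [z2 [b2 [H2 ->]]]|a _ [z1 [b1 [H1 ->]]]].
  - destruct Hz as [i [Hi ->]]. destruct (Nat.eq_dec i n) as [->|Hne].
    + exists 1%Z, gone. split. apply gen_one. simpl. gsolve.
    + exists 0%Z, (g i). split. apply gen_in. exists i. split; auto. lia. simpl. gsolve.
  - exists 0%Z, gone. split. apply gen_one. simpl. gsolve.
  - exists (z1 + z2)%Z, (b1 ** b2). split. apply gen_mul; auto.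
    rewrite zpow_add. gsimpl. f_equal. rewrite <- !assocR. f_equal. apply Hab.
  - exists (- z1)%Z, (ginv b1). split. apply gen_inv; auto.
    rewrite zpow_opp, invmul. apply Hab.
Qed.

Lemma genn_zero (g : nat -> A) t : genn g 0 t -> t = gone.
Proof.
  intro H. apply (gen_least _ (fun u => u = gone)) in H; auto.
  split; auto. split; intros; subst; gsolve.
  intros z [i [Hi _]]. lia.
Qed.

Theorem fin_torsion : forall n (g : nat -> A), exists L : list A,
  forall t, genn g n t -> torsion t -> In t L.
Proof.
  induction n; intro g.
  - exists (gone :: nil). intros t Ht _. left. symmetry. apply genn_zero with g; auto.
  - destruct (IHn g) as [LB HLB].
    set (x := g n). set (B := genn g n).
    assert (HB : subgroup B) by apply gen_subgroup.
    destruct (classic (exists d, 1 <= d /\ B (gpow x d))) as [[d [Hd HBd]]|Hno].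
    +
      assert (Hdec : forall t, genn g (S n) t -> exists j b, j < d /\ B b /\ t = gpow x j ** b).
      { intros t Ht. destruct (decomp g n t Ht) as [z [b [Hb ->]]].
        fold x. fold B in Hb.
        pose proof (Z.div_mod z (Z.of_nat d) ltac:(lia)) as Hzd.
        pose proof (Z.mod_pos_bound z (Z.of_nat d) ltac:(lia)) as Hmb.
        set (q := (z / Z.of_nat d)%Z) in *. set (j := (z mod Z.of_nat d)%Z) in *.
        assert (Hq : B (zpow x (Z.of_nat d * q))).
        { destruct (Z_le_gt_dec 0 q) as [Hq|Hq].
          - replace (Z.of_nat d * q)%Z with (Z.of_nat (d * Z.to_nat q)) by lia.
            rewrite zpow_of_nat, gpow_mulr. apply subgroup_gpow; auto.
          - replace (Z.of_nat d * q)%Z with (- Z.of_nat (d * Z.to_nat (- q)))%Z by lia.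
            rewrite zpow_neg_nat, gpow_mulr. apply HB. apply subgroup_gpow; auto. }
        exists (Z.to_nat j), (zpow x (Z.of_nat d * q) ** b). split. lia. split. apply HB; auto.
        rewrite <- zpow_of_nat. rewrite Z2Nat.id by lia. rewrite Hzd at 1.
        rewrite Z.add_comm, zpow_add. gsolve. }
      set (P := fun j t => torsion t /\ exists b, B b /\ t = gpow x j ** b).
      set (R := fun j => epsilon (inhabits gone) (P j)).
      exists (flat_map (fun j => map (fun l => R j ** l) LB) (seq 0 d)).
      intros t Ht Htor. destruct (Hdec t Ht) as [j [b [Hj [Hb Ht']]]].
      assert (HP : P j (R j)). { apply epsilon_spec. exists t. split; auto. exists b; auto. }
      destruct HP as [HRt [b0 [Hb0 HR]]].
      apply in_flat_map. exists j. split. apply in_seq. lia.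
      apply in_map_iff. exists (ginv (R j) ** t). split. gsolve.
      apply HLB. rewrite HR, Ht'. replace (ginv (gpow x j ** b0) ** (gpow x j ** b)) with (ginv b0 ** b).
      apply HB; auto. apply HB; auto.
      gsolve.
      apply torsion_mul; auto. apply torsion_inv; auto.
    + exists LB. intros t Ht Htor.
      destruct (decomp g n t Ht) as [z [b [Hb Hteq]]]. fold x in Hteq.
      destruct Htor as [k [Hk Htk]].
      assert (Hw : B (gpow (zpow x z) k)).
      { rewrite Hteq, gpow_mul_ab in Htk.
        assert (E : ginv (gpow (zpow x z) k) = gpow b k) by (apply inv_uniq; auto).
        replace (gpow (zpow x z) k) with (ginv (gpow b k)) by (rewrite <- E, invinv; reflexivity).
        apply HB. apply subgroup_gpow; auto. }
      assert (Hz : zpow x z = gone).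
      { destruct (zpow_cases x z) as [a [Ha|Ha]]; rewrite Ha in Hw |- *.
        - rewrite <- gpow_mulr in Hw. destruct a. reflexivity.
          exfalso. apply Hno. exists (S a * k). split; auto. nia.
        - rewrite gpow_inv, <- gpow_mulr in Hw. destruct a. simpl. apply inv1.
          exfalso. apply Hno. exists (S a * k). split; [nia|]. rewrite <- invinv. apply HB; auto. }
      rewrite Hz, mul1 in Hteq. subst t. apply HLB; auto. exists k; auto.
Qed.
End Abelian.

Section Quot.
Context {G : group} (K : G -> Prop) (HK : subgroup K)
  (Hn : forall a g : G, K a -> K (ginv g ** a ** g)).

Definition cls (x : G) : G -> Prop := fun y => K (ginv x ** y).
Definition Qc := {P : G -> Prop | exists x, P = cls x}.
Definition qmk (x : G) : Qc := exist _ (cls x) (ex_intro _ x eq_refl).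
Definition rep (P : Qc) : G := proj1_sig (constructive_indefinite_description _ (proj2_sig P)).

Lemma Kone : K gone. Proof. apply HK. Qed.
Lemma Kmul a b : K a -> K b -> K (a ** b). Proof. apply HK. Qed.
Lemma Kinv a : K a -> K (ginv a). Proof. apply HK. Qed.

Lemma sig_eq (P Q : Qc) : proj1_sig P = proj1_sig Q -> P = Q.
Proof. destruct P, Q. simpl. intros ->. f_equal. apply proof_irrelevance. Qed.

Lemma qmk_eq x y : qmk x = qmk y <-> K (ginv x ** y).
Proof.
  split.
  - intro H. assert (E : cls x = cls y) by (apply (f_equal (@proj1_sig _ _)) in H; exact H).
    assert (cls y y) by (unfold cls; rewrite mulVx; apply Kone).
    rewrite <- E in H0. exact H0.
  - intro H. apply sig_eq. simpl. apply functional_extensionality. intro z.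
    apply propositional_extensionality. unfold cls. split; intro Hz.
    + replace (ginv y ** z) with (ginv (ginv x ** y) ** (ginv x ** z)) by gsolve. apply Kmul; auto. apply Kinv; auto.
    + replace (ginv x ** z) with ((ginv x ** y) ** (ginv y ** z)) by gsolve. apply Kmul; auto.
Qed.

Lemma qmk_rep P : qmk (rep P) = P.
Proof.
  apply sig_eq. simpl. unfold rep.
  destruct (constructive_indefinite_description _ _) as [x Hx]. simpl. auto.
Qed.

Lemma rep_eq x : K (ginv (rep (qmk x)) ** x).
Proof. apply qmk_eq. apply qmk_rep. Qed.

Lemma K_cong_mul x x' y y' : K (ginv x ** x') -> K (ginv y ** y') -> K (ginv (x ** y) ** (x' ** y')).
Proof.
  intros H1 H2.
  replace (ginv (x ** y) ** (x' ** y')) with ((ginv y ** (ginv x ** x') ** y) ** (ginv y ** y')) by gsolve.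
  apply Kmul; auto.
Qed.
Lemma K_cong_inv x x' : K (ginv x ** x') -> K (ginv (ginv x) ** ginv x').
Proof.
  intros H.
  replace (ginv (ginv x) ** ginv x') with (ginv (ginv x) ** ginv (ginv x ** x') ** ginv x) by gsolve.
  apply Hn. apply Kinv. auto.
Qed.

Definition qmul (P Q : Qc) : Qc := qmk (rep P ** rep Q).
Definition qinv (P : Qc) : Qc := qmk (ginv (rep P)).
Definition qone : Qc := qmk gone.

Lemma qmul_mk x y : qmul (qmk x) (qmk y) = qmk (x ** y).
Proof. apply qmk_eq. apply K_cong_mul; apply rep_eq. Qed.
Lemma qinv_mk x : qinv (qmk x) = qmk (ginv x).
Proof. apply qmk_eq. apply K_cong_inv; apply rep_eq. Qed.

Lemma q_assoc P Q R : qmul P (qmul Q R) = qmul (qmul P Q) R.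
Proof.
  rewrite <- (qmk_rep P), <- (qmk_rep Q), <- (qmk_rep R). rewrite !qmul_mk. f_equal. apply gassoc.
Qed.
Lemma q_mul1 P : qmul qone P = P.
Proof. rewrite <- (qmk_rep P). unfold qone. rewrite qmul_mk. rewrite mul1. reflexivity. Qed.
Lemma q_mulV P : qmul (qinv P) P = qone.
Proof. rewrite <- (qmk_rep P). rewrite qinv_mk, qmul_mk, mulVx. reflexivity. Qed.

Definition Quot : group := @Group Qc qmul qinv qone q_assoc q_mul1 q_mulV.

Lemma qgpow x k : @gpow Quot (qmk x) k = qmk (gpow x k).
Proof. induction k; simpl. reflexivity. rewrite IHk. apply qmul_mk. Qed.

Lemma qmk_one x : qmk x = (@gone Quot) <-> K x.
Proof. simpl. unfold qone. split; intro H. apply qmk_eq in H. replace x with (ginv (ginv x ** gone)) by gsolve. apply Kinv; auto.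
  apply qmk_eq. replace (ginv x ** gone) with (ginv x) by gsolve. apply Kinv; auto. Qed.

End Quot.

Theorem torsion_quot (G : group) (K : G -> Prop) :
  subgroup K -> (forall a g : G, K a -> K (ginv g ** a ** g)) ->
  (forall x y : G, K (comm x y)) -> fin_gen G ->
  exists (L : list G) e, 1 <= e /\
    (forall t, Is K t -> exists r, In r L /\ Is K r /\ K (ginv r ** t)) /\
    (forall t, Is K t -> K (gpow t e)).
Proof.
  intros HK Hn Hc [x [n Hgen]].
  set (Q := Quot K HK Hn).
  assert (Hab : forall u v : Q, u ** v = v ** u).
  { intros u v. rewrite <- (qmk_rep K u), <- (qmk_rep K v). simpl.
    rewrite !(qmul_mk K HK Hn). apply (qmk_eq K HK).
    replace (ginv (rep K u ** rep K v) ** (rep K v ** rep K u)) with (comm (rep K v) (rep K u)) by (unfold comm; gsolve).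
    auto. }
  assert (Hg : forall q : Q, genn (fun i => (qmk K (x i) : Q)) n q).
  { intro q. rewrite <- (qmk_rep K q). generalize (Hgen (rep K q)). generalize (rep K q).
    intros y Hy. induction Hy as [z [i [Hi ->]]| |a b _ IHa _ IHb|a _ IHa].
    - apply gen_in. exists i. auto.
    - apply gen_one.
    - rewrite <- (qmul_mk K HK Hn). apply (@gen_mul Q _ (qmk K a) (qmk K b)); auto.
    - rewrite <- (qinv_mk K HK Hn). apply (@gen_inv Q _ (qmk K a)); auto. }
  destruct (fin_torsion (A:=Q) Hab n (fun i => (qmk K (x i) : Q))) as [LQ HLQ].
  destruct (exponent_list LQ) as [e [He HE]].
  assert (Htor : forall t, Is K t -> torsion (qmk K t : Q)).
  { intros t [k [Hk Ht]]. exists k. split; auto. rewrite (qgpow K HK Hn). apply qmk_one; auto. }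
  exists (map (rep K) LQ), e. split; auto. split.
  - intros t Ht. exists (rep K (qmk K t)). split. apply in_map. apply HLQ; auto.
    split. 2: apply (rep_eq K HK).
    destruct Ht as [k [Hk Htk]]. exists k. split; auto.
    apply (qmk_one K HK Hn). rewrite <- (qgpow K HK Hn). rewrite qmk_rep. rewrite (qgpow K HK Hn).
    apply qmk_one; auto.
  - intros t Ht. apply (qmk_one K HK Hn). rewrite <- (qgpow K HK Hn). apply HE; auto.
Qed.

Fixpoint tpow (t : term) (k : nat) : term :=
  match k with 0 => tone | S k => tmul t (tpow t k) end.
Definition tcomm (t u : term) : term := tmul (tmul (tinv t) (tinv u)) (tmul t u).
Fixpoint pcm (B m j : nat) : term :=
  match j with 0 => tone | S j => tmul (pcm B m j) (tcomm (tvar (B + j)) (tvar (B + m + j))) end.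
Fixpoint exmany (b c : nat) (p : formula) : formula :=
  match c with 0 => p | S c => fex b (exmany (S b) c p) end.
Definition ovr {G : group} (e : nat -> G) (b c : nat) (f : nat -> G) : nat -> G :=
  fun v => if (b <=? v) && (v <? b + c) then f (v - b) else e v.

Definition PCf (B m : nat) (t s : term) : formula :=
  exmany B (2 * m) (feq t (tmul (pcm B m m) s)).
Definition fcent (W : nat) (t : term) : formula :=
  fall W (feq (tmul t (tvar W)) (tmul (tvar W) t)).
Definition RM (m k : nat) (t : term) : formula :=
  fex 6 (fand (fcent 7 (tvar 6)) (PCf 10 m (tpow t k) (tvar 6))).
Definition RN (m k : nat) (t : term) : formula := PCf 10 m (tpow t k) tone.
Definition PN (m k : nat) (t : term) : formula :=
  fex 6 (fand (fcent 7 (tvar 6)) (RN m k (tmul t (tinv (tvar 6))))).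

Section Sem.
Context {G : group}.

Lemma teval_tpow (e : nat -> G) t k : teval e (tpow t k) = gpow (teval e t) k.
Proof. induction k; simpl; [reflexivity|rewrite IHk; reflexivity]. Qed.

Lemma teval_pcm (e : nat -> G) B m j :
  teval e (pcm B m j) = prodn (fun i => comm (e (B + i)) (e (B + m + i))) j.
Proof. induction j; simpl; [reflexivity|rewrite IHj; reflexivity]. Qed.

Lemma teval_ext (e1 e2 : nat -> G) t : (forall v, tfree t v = true -> e1 v = e2 v) -> teval e1 t = teval e2 t.
Proof.
  induction t; simpl; intro H; auto.
  - apply H. apply Nat.eqb_refl.
  - rewrite IHt1, IHt2; auto; intros v Hv; apply H; rewrite Hv; auto using orb_true_r.
  - rewrite IHt; auto.
Qed.

Lemma sat_exmany (e : nat -> G) b c p :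
  sat e (exmany b c p) <-> exists f, sat (ovr e b c f) p.
Proof.
  revert e b. induction c; intros e b; simpl.
  - split. intro H. exists (fun _ => gone). unfold ovr.
    replace (fun v => if (b <=? v) && (v <? b + 0) then gone else e v) with e; auto.
    apply functional_extensionality. intro v. destruct (b <=? v) eqn:E1; destruct (v <? b + 0) eqn:E2; simpl; auto.
    apply Nat.leb_le in E1. apply Nat.ltb_lt in E2. lia.
    intros [f Hf]. unfold ovr in Hf.
    replace (fun v => if (b <=? v) && (v <? b + 0) then f (v - b) else e v) with e in Hf; auto.
    apply functional_extensionality. intro v. destruct (b <=? v) eqn:E1; destruct (v <? b + 0) eqn:E2; simpl; auto.
    apply Nat.leb_le in E1. apply Nat.ltb_lt in E2. lia.
  - split.
    + intros [x Hx]. apply IHc in Hx. destruct Hx as [f Hf].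
      exists (fun i => match i with 0 => x | S i => f i end).
      match goal with H : sat ?e1 p |- sat ?e2 p => replace e2 with e1; auto end.
      apply functional_extensionality. intro v. unfold ovr, upd.
      destruct (Nat.eq_dec v b) as [->|Hne].
      * rewrite Nat.eqb_refl. replace ((S b <=? b)) with false by (symmetry; apply Nat.leb_gt; lia).
        replace ((b <=? b) && (b <? b + S c)) with true by (symmetry; apply andb_true_iff; split; [apply Nat.leb_le|apply Nat.ltb_lt]; lia).
        rewrite Nat.sub_diag. reflexivity.
      * apply Nat.eqb_neq in Hne. rewrite Hne. apply Nat.eqb_neq in Hne.
        destruct (S b <=? v) eqn:E1; destruct (v <? S b + c) eqn:E2;
        destruct (b <=? v) eqn:E3; destruct (v <? b + S c) eqn:E4; simpl; auto;
        repeat match goal with H : (_ <=? _) = true |- _ => apply Nat.leb_le in H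
                        | H : (_ <=? _) = false |- _ => apply Nat.leb_gt in H
                        | H : (_ <? _) = true |- _ => apply Nat.ltb_lt in H
                        | H : (_ <? _) = false |- _ => apply Nat.ltb_ge in H end; try lia.
        replace (v - b) with (S (v - S b)) by lia. reflexivity.
    + intros [f Hf]. exists (f 0). apply IHc. exists (fun i => f (S i)).
      match goal with H : sat ?e1 p |- sat ?e2 p => replace e2 with e1; auto end.
      apply functional_extensionality. intro v. unfold ovr, upd.
      destruct (Nat.eq_dec v b) as [->|Hne].
      * rewrite Nat.eqb_refl. replace ((S b <=? b)) with false by (symmetry; apply Nat.leb_gt; lia).
        replace ((b <=? b) && (b <? b + S c)) with true by (symmetry; apply andb_true_iff; split; [apply Nat.leb_le|apply Nat.ltb_lt]; lia).
        rewrite Nat.sub_diag. reflexivity.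
      * apply Nat.eqb_neq in Hne. rewrite Hne. apply Nat.eqb_neq in Hne.
        destruct (S b <=? v) eqn:E1; destruct (v <? S b + c) eqn:E2;
        destruct (b <=? v) eqn:E3; destruct (v <? b + S c) eqn:E4; simpl; auto;
        repeat match goal with H : (_ <=? _) = true |- _ => apply Nat.leb_le in H
                        | H : (_ <=? _) = false |- _ => apply Nat.leb_gt in H
                        | H : (_ <? _) = true |- _ => apply Nat.ltb_lt in H
                        | H : (_ <? _) = false |- _ => apply Nat.ltb_ge in H end; try lia.
        replace (v - b) with (S (v - S b)) by lia. reflexivity.
Qed.

Lemma sem_PCf (e : nat -> G) B m t s :
  (forall v, tfree t v = true -> v < B) -> (forall v, tfree s v = true -> v < B) ->
  (sat e (PCf B m t s) <-> exists a b : nat -> G,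
      teval e t = prodn (fun i => comm (a i) (b i)) m ** teval e s).
Proof.
  intros Ht Hs. unfold PCf. rewrite sat_exmany. cbn [sat teval].
  assert (Hlow : forall f u, (forall v, tfree u v = true -> v < B) -> teval (ovr e B (2 * m) f) u = teval e u).
  { intros f u Hu. apply teval_ext. intros v Hv. apply Hu in Hv. unfold ovr.
    replace (B <=? v) with false by (symmetry; apply Nat.leb_gt; lia). reflexivity. }
  split.
  - intros [f Hf]. rewrite (Hlow f t Ht), (Hlow f s Hs) in Hf. exists f, (fun i => f (m + i)).
    rewrite Hf. f_equal. rewrite teval_pcm. apply prodn_ext. intros i Hi. unfold ovr.
    replace ((B <=? B + i) && (B + i <? B + 2 * m)) with true by (symmetry; apply andb_true_iff; split; [apply Nat.leb_le|apply Nat.ltb_lt]; lia).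
    replace ((B <=? B + m + i) && (B + m + i <? B + 2 * m)) with true by (symmetry; apply andb_true_iff; split; [apply Nat.leb_le|apply Nat.ltb_lt]; lia).
    replace (B + i - B) with i by lia. replace (B + m + i - B) with (m + i) by lia. reflexivity.
  - intros [a [b Hab]]. exists (fun v => if v <? m then a v else b (v - m)).
    rewrite !(Hlow _ t Ht), !(Hlow _ s Hs). rewrite Hab. f_equal. rewrite teval_pcm. apply prodn_ext. intros i Hi. unfold ovr.
    replace ((B <=? B + i) && (B + i <? B + 2 * m)) with true by (symmetry; apply andb_true_iff; split; [apply Nat.leb_le|apply Nat.ltb_lt]; lia).
    replace ((B <=? B + m + i) && (B + m + i <? B + 2 * m)) with true by (symmetry; apply andb_true_iff; split; [apply Nat.leb_le|apply Nat.ltb_lt]; lia).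
    replace (B + i - B) with i by lia. replace (B + m + i - B) with (m + i) by lia.
    replace (i <? m) with true by (symmetry; apply Nat.ltb_lt; lia).
    replace (m + i <? m) with false by (symmetry; apply Nat.ltb_ge; lia).
    f_equal. f_equal. lia.
Qed.

Lemma sem_fcent (e : nat -> G) W t : tfree t W = false ->
  (sat e (fcent W t) <-> center G (teval e t)).
Proof.
  intros Ht. unfold fcent, center. cbn [sat teval].
  assert (Hu : forall x, teval (upd e W x) t = teval e t).
  { intro x. apply teval_ext. intros v Hv. unfold upd. destruct (Nat.eqb v W) eqn:E; auto.
    apply Nat.eqb_eq in E. subst. congruence. }
  assert (Hw : forall x, upd e W x W = x).
  { intro x. unfold upd. rewrite Nat.eqb_refl. reflexivity. }
  split; intros H x; specialize (H x); rewrite ?Hu, ?Hw in *; auto.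
Qed.

Lemma tfree_tpow t k v : tfree (tpow t k) v = true -> tfree t v = true.
Proof. induction k; simpl; [discriminate|]. intro H. apply orb_true_iff in H. destruct H; auto. Qed.

Definition RMsem (m k : nat) (x : G) := exists c, center G c /\ exists a b : nat -> G,
  gpow x k = prodn (fun i => comm (a i) (b i)) m ** c.
Definition RNsem (m k : nat) (x : G) := exists a b : nat -> G,
  gpow x k = prodn (fun i => comm (a i) (b i)) m ** gone.

Lemma sem_RM (e : nat -> G) m k t : (forall v, tfree t v = true -> v < 6) ->
  (sat e (RM m k t) <-> RMsem m k (teval e t)).
Proof.
  intros Ht. unfold RM, RMsem. cbn [sat].
  assert (Hu : forall x, teval (upd e 6 x) t = teval e t).
  { intro x. apply teval_ext. intros v Hv. unfold upd. apply Ht in Hv.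
    replace (Nat.eqb v 6) with false by (symmetry; apply Nat.eqb_neq; lia). reflexivity. }
  split.
  - intros [c [Hc HP]]. exists c. rewrite sem_fcent in Hc by reflexivity. simpl in Hc.
    unfold upd in Hc. simpl in Hc. split; auto.
    rewrite sem_PCf in HP. destruct HP as [a [b Hab]]. exists a, b.
    rewrite teval_tpow, Hu in Hab. rewrite Hab. simpl. unfold upd. simpl. reflexivity.
    intros v Hv. apply tfree_tpow, Ht in Hv. lia.
    intros v Hv. cbn [tfree] in Hv. apply Nat.eqb_eq in Hv. lia.
  - intros [c [Hc [a [b Hab]]]]. exists c. split.
    rewrite sem_fcent by reflexivity. simpl. unfold upd. simpl. auto.
    rewrite sem_PCf. exists a, b. rewrite teval_tpow, Hu, Hab. simpl. unfold upd. simpl. reflexivity.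
    intros v Hv. apply tfree_tpow, Ht in Hv. lia.
    intros v Hv. cbn [tfree] in Hv. apply Nat.eqb_eq in Hv. lia.
Qed.

Lemma sem_RN (e : nat -> G) m k t : (forall v, tfree t v = true -> v < 10) ->
  (sat e (RN m k t) <-> RNsem m k (teval e t)).
Proof.
  intros Ht. unfold RN, RNsem. rewrite sem_PCf. rewrite teval_tpow. simpl. reflexivity.
  intros v Hv. apply tfree_tpow, Ht in Hv. lia.
  simpl. discriminate.
Qed.

Lemma sem_PN (e : nat -> G) m k t : (forall v, tfree t v = true -> v < 6) ->
  (sat e (PN m k t) <-> exists c, center G c /\ RNsem m k (teval e t ** ginv c)).
Proof.
  intros Ht. unfold PN. cbn [sat].
  assert (Hu : forall x, teval (upd e 6 x) t = teval e t).
  { intro x. apply teval_ext. intros v Hv. unfold upd. apply Ht in Hv.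
    replace (Nat.eqb v 6) with false by (symmetry; apply Nat.eqb_neq; lia). reflexivity. }
  split.
  - intros [c [Hc HP]]. exists c. rewrite sem_fcent in Hc by reflexivity. simpl in Hc.
    unfold upd in Hc. simpl in Hc. split; auto.
    rewrite sem_RN in HP. simpl in HP. rewrite Hu in HP. unfold upd in HP. simpl in HP. exact HP.
    intros v Hv. cbn [tfree] in Hv. apply orb_true_iff in Hv. destruct Hv as [Hv|Hv].
    apply Ht in Hv; lia. apply Nat.eqb_eq in Hv. lia.
  - intros [c [Hc HP]]. exists c. split.
    rewrite sem_fcent by reflexivity. simpl. unfold upd. simpl. auto.
    rewrite sem_RN. simpl. rewrite Hu. unfold upd. simpl. exact HP.
    intros v Hv. cbn [tfree] in Hv. apply orb_true_iff in Hv. destruct Hv as [Hv|Hv].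
    apply Ht in Hv; lia. apply Nat.eqb_eq in Hv. lia.
Qed.
End Sem.

Lemma ffree_exmany b c p v : ffree (exmany b c p) v = true -> ffree p v = true /\ ~ (b <= v < b + c).
Proof.
  revert b. induction c; intros b H; simpl in H.
  - split; auto. lia.
  - apply andb_true_iff in H. destruct H as [H1 H2]. apply IHc in H2. destruct H2 as [H2 H3].
    split; auto. apply negb_true_iff, Nat.eqb_neq in H1. lia.
Qed.

Lemma tfree_pcm B m j v : j <= m -> tfree (pcm B m j) v = true -> B <= v < B + 2 * m.
Proof.
  induction j; simpl; intros Hj H; [discriminate|].
  repeat (apply orb_true_iff in H; destruct H as [H|H]);
    try (apply IHj; auto; lia); apply Nat.eqb_eq in H; lia.
Qed.

Lemma ffree_PCf B m t s v : ffree (PCf B m t s) v = true -> tfree t v = true \/ tfree s v = true.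
Proof.
  unfold PCf. intro H. apply ffree_exmany in H. destruct H as [H1 H2]. simpl in H1.
  repeat (apply orb_true_iff in H1; destruct H1 as [H1|H1]); auto.
  apply tfree_pcm in H1; lia.
Qed.

Ltac eqbs := repeat match goal with
  | H : negb _ = true |- _ => apply negb_true_iff in H
  | H : (_ =? _) = false |- _ => apply Nat.eqb_neq in H
  | H : (_ =? _) = true |- _ => apply Nat.eqb_eq in H
  | H : (_ || _) = true |- _ => apply orb_true_iff in H; destruct H as [H|H]
  | H : (_ && _) = true |- _ => apply andb_true_iff in H; destruct H as [? H]
  end.

Lemma ffree_RM m k t v : ffree (RM m k t) v = true -> tfree t v = true.
Proof.
  unfold RM, fcent. cbn [ffree tfree]. intro H.
  apply andb_true_iff in H. destruct H as [H1 H2]. apply orb_true_iff in H2. destruct H2 as [H2|H2].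
  - cbn [tfree] in H2. eqbs; lia.
  - apply ffree_PCf in H2. destruct H2 as [H2|H2]. apply tfree_tpow in H2; auto.
    cbn [tfree] in H2. eqbs; lia.
Qed.

Lemma ffree_RN m k t v : ffree (RN m k t) v = true -> tfree t v = true.
Proof.
  unfold RN. intro H. apply ffree_PCf in H. destruct H as [H|H]. apply tfree_tpow in H; auto. discriminate.
Qed.

Lemma ffree_PN m k t v : ffree (PN m k t) v = true -> tfree t v = true.
Proof.
  unfold PN, fcent. cbn [ffree tfree]. intro H.
  apply andb_true_iff in H. destruct H as [H1 H2]. apply orb_true_iff in H2. destruct H2 as [H2|H2].
  - cbn [tfree] in H2. eqbs; lia.
  - apply ffree_RN in H2. cbn [tfree] in H2. apply orb_true_iff in H2. destruct H2 as [H2|H2]; auto.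
    eqbs; lia.
Qed.

Section GroupFacts.
Context {G : group}.

Lemma derived_sub : subgroup (derived G).
Proof. apply gen_subgroup. Qed.
Lemma derived_comm (x y : G) : derived G (comm x y).
Proof. apply gen_in. eauto. Qed.
Lemma derived_normal (a g : G) : derived G a -> derived G (ginv g ** a ** g).
Proof.
  intro Ha. induction Ha as [z Hz| |a b _ IHa _ IHb|a _ IHa].
  - destruct Hz as [u [v ->]]. rewrite comm_conj. apply derived_comm.
  - replace (ginv g ** gone ** g) with (@gone G) by gsolve. apply gen_one.
  - replace (ginv g ** (a ** b) ** g) with ((ginv g ** a ** g) ** (ginv g ** b ** g)) by gsolve.
    apply gen_mul; auto.
  - replace (ginv g ** ginv a ** g) with (ginv (ginv g ** a ** g)) by gsolve. apply gen_inv; auto.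
Qed.
Lemma center_mul (a b : G) : center G a -> center G b -> center G (a ** b).
Proof. intros Ha Hb x. rewrite assocR, Hb, <- assocR, Ha. gsolve. Qed.
Lemma center_inv (a : G) : center G a -> center G (ginv a).
Proof.
  intros Ha x. apply (mul_cancel_l a). rewrite mulKr.
  rewrite <- assocR, Ha. gsolve.
Qed.
Lemma center_one : center G gone.
Proof. intro x. gsolve. Qed.

Definition K1 : G -> Prop := prodset (derived G) (center G).

Lemma K1_sub : subgroup K1.
Proof.
  split; [|split].
  - exists gone, gone. split. apply gen_one. split. apply center_one. gsolve.
  - intros x y [a [b [Ha [Hb ->]]]] [a' [b' [Ha' [Hb' ->]]]].
    exists (a ** a'), (b ** b'). split. apply gen_mul; auto. split. apply center_mul; auto.
    rewrite !assocR. f_equal. rewrite <- !assocR. f_equal. apply Hb.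
  - intros x [a [b [Ha [Hb ->]]]]. exists (ginv a), (ginv b). split. apply gen_inv; auto.
    split. apply center_inv; auto. rewrite invmul. apply center_inv; auto.
Qed.
Lemma K1_normal (a g : G) : K1 a -> K1 (ginv g ** a ** g).
Proof.
  intros [u [c [Hu [Hc ->]]]]. exists (ginv g ** u ** g), c. split. apply derived_normal; auto. split; auto.
  replace (ginv g ** (u ** c) ** g) with (ginv g ** u ** (c ** g)) by gsolve. rewrite Hc. gsolve.
Qed.
Lemma K1_comm (x y : G) : K1 (comm x y).
Proof. exists (comm x y), gone. split. apply derived_comm. split. apply center_one. gsolve. Qed.

Lemma PC_derived m (x : G) : PC m x -> derived G x.
Proof. intros [a [b ->]]. apply subgroup_prodn. apply derived_sub. intros; apply derived_comm. Qed.

Lemma PC_inv m (x : G) : PC m x -> PC m (ginv x).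
Proof.
  intros [a [b ->]]. exists (fun i => b (m - 1 - i)), (fun i => a (m - 1 - i)).
  rewrite prodn_inv. apply prodn_ext. intros. apply comm_inv.
Qed.

Lemma PC_reduce m : (forall x : G, PC (S m) x -> PC m x) ->
  forall j (x : G), PC j x -> PC m x.
Proof.
  intros HW. induction j; intros x Hx.
  - destruct Hx as [a [b ->]]. exists (fun _ => gone), (fun _ => gone). simpl.
    symmetry. apply prodn_one. intros; apply comm_1r.
  - destruct Hx as [a [b ->]]. simpl.
    apply HW. replace (S m) with (m + 1) by lia. apply PC_mul.
    apply IHj. exists a, b. reflexivity. exists (fun _ => a j), (fun _ => b j). simpl. gsolve.
Qed.

Lemma derived_PC m : (forall x : G, PC (S m) x -> PC m x) ->
  forall x : G, derived G x <-> PC m x.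
Proof.
  intros HW x. split; [|apply PC_derived].
  intro Hx. assert (exists j, PC j x) as [j Hj].
  { induction Hx as [z [u [v ->]]| |a b _ [j1 H1] _ [j2 H2]|a _ [j1 H1]].
    - exists 1, (fun _ => u), (fun _ => v). simpl. gsolve.
    - exists 0. exists (fun _ => gone), (fun _ => gone). reflexivity.
    - exists (j1 + j2). apply PC_mul; auto.
    - exists j1. apply PC_inv; auto. }
  apply (PC_reduce m HW j). auto.
Qed.

Lemma RMsem_iff m k (x : G) : (forall y : G, derived G y <-> PC m y) ->
  (RMsem m k x <-> K1 (gpow x k)).
Proof.
  intros HD. unfold RMsem, K1, prodset. split.
  - intros [c [Hc [a [b Hab]]]]. exists (prodn (fun i => comm (a i) (b i)) m), c.
    split. apply HD. exists a, b. reflexivity. auto.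
  - intros [u [c [Hu [Hc Hx]]]]. exists c. split; auto. apply HD in Hu. destruct Hu as [a [b ->]].
    exists a, b. auto.
Qed.

Lemma RNsem_iff m k (x : G) : (forall y : G, derived G y <-> PC m y) ->
  (RNsem m k x <-> derived G (gpow x k)).
Proof.
  intros HD. unfold RNsem. rewrite HD. unfold PC. split; intros [a [b Hab]]; exists a, b;
  rewrite Hab; gsolve.
Qed.

End GroupFacts.

Lemma H_side (H : group) m e1 e2 : 1 <= e1 -> 1 <= e2 ->
  (forall x : H, PC (S m) x -> PC m x) ->
  (forall k (x : H), 1 <= k -> RMsem m k x -> RMsem m e1 x) ->
  (forall k (x : H), 1 <= k -> RNsem m k x -> RNsem m e2 x) ->
  (forall x : H, MIs H x <-> RMsem m e1 x) /\
  (forall x : H, NIs H x <-> exists c, center H c /\ RNsem m e2 (x ** ginv c)).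
Proof.
  intros He1 He2 HW HT HU. pose proof (derived_PC m HW) as HD. split.
  - intro x. unfold MIs, Is. split.
    + intros [k [Hk Hx]]. apply (HT k); auto. apply RMsem_iff; auto.
    + intro Hx. exists e1. split; auto. apply RMsem_iff with m; auto.
  - intro x. unfold NIs, prodset, Is. split.
    + intros [a [c [[k [Hk Ha]] [Hc ->]]]]. exists c. split; auto.
      replace (a ** c ** ginv c) with a by gsolve. apply (HU k); auto. apply RNsem_iff; auto.
    + intros [c [Hc Hx]]. exists (x ** ginv c), c. split.
      exists e2. split; auto. apply RNsem_iff with m; auto. split; auto. gsolve.
Qed.

Definition SW m := fall 0 (fimp (PCf 10 (S m) (tvar 0) tone) (PCf 10 m (tvar 0) tone)).
Definition ST m k e := fall 0 (fimp (RM m k (tvar 0)) (RM m e (tvar 0))).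
Definition SU m k e := fall 0 (fimp (RN m k (tvar 0)) (RN m e (tvar 0))).

Lemma sentence_fall0 p q : (forall v, ffree p v = true -> v = 0) -> (forall v, ffree q v = true -> v = 0) ->
  sentence (fall 0 (fimp p q)).
Proof.
  intros Hp Hq v Hv. cbn [ffree] in Hv. apply andb_true_iff in Hv. destruct Hv as [H1 H2].
  apply negb_true_iff, Nat.eqb_neq in H1. apply orb_true_iff in H2. destruct H2 as [H2|H2].
  apply Hp in H2; lia. apply Hq in H2; lia.
Qed.

Lemma tv0 v : tfree (tvar 0) v = true -> v = 0.
Proof. intro H. cbn [tfree] in H. apply Nat.eqb_eq in H. lia. Qed.

Lemma SW_sent m : sentence (SW m).
Proof.
  apply sentence_fall0; intros v Hv; apply ffree_PCf in Hv; destruct Hv as [Hv|Hv];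
    try apply tv0; auto; discriminate.
Qed.
Lemma ST_sent m k e : sentence (ST m k e).
Proof. apply sentence_fall0; intros v Hv; apply ffree_RM in Hv; apply tv0; auto. Qed.
Lemma SU_sent m k e : sentence (SU m k e).
Proof. apply sentence_fall0; intros v Hv; apply ffree_RN in Hv; apply tv0; auto. Qed.

Lemma upd0 {H : group} (e : nat -> H) x : teval (upd e 0 x) (tvar 0) = x.
Proof. simpl. unfold upd. reflexivity. Qed.

Lemma sem_PC0 {H : group} (e : nat -> H) j x :
  sat (upd e 0 x) (PCf 10 j (tvar 0) tone) <-> PC j x.
Proof.
  rewrite sem_PCf. rewrite upd0. simpl. unfold PC. split; intros [a [b Hab]]; exists a, b; rewrite Hab; gsolve.
  intros v Hv; apply tv0 in Hv; lia. discriminate.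
Qed.

Lemma sat_SW {H : group} m : sat (fun _ => @gone H) (SW m) <-> (forall x : H, PC (S m) x -> PC m x).
Proof. unfold SW. cbn [sat]. split; intros Hs x; specialize (Hs x); rewrite !sem_PC0 in *; auto. Qed.

Lemma sat_ST {H : group} m k e : sat (fun _ => @gone H) (ST m k e) <-> (forall x : H, RMsem m k x -> RMsem m e x).
Proof.
  unfold ST. cbn [sat]. split; intros Hs x; specialize (Hs x);
  rewrite !sem_RM, !upd0 in *; auto; intros v Hv; apply tv0 in Hv; lia.
Qed.
Lemma sat_SU {H : group} m k e : sat (fun _ => @gone H) (SU m k e) <-> (forall x : H, RNsem m k x -> RNsem m e x).
Proof.
  unfold SU. cbn [sat]. split; intros Hs x; specialize (Hs x);
  rewrite !sem_RN, !upd0 in *; auto; intros v Hv; apply tv0 in Hv; lia.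
Qed.

Lemma tvars3 n v : n < 3 -> tfree (tvar n) v = true -> v < 3.
Proof. cbn [tfree]. intros Hn Hv. apply Nat.eqb_eq in Hv. lia. Qed.

Theorem mainTheorem8 :
  forall G : group, fin_gen G -> nilpotent G ->
  (* definability of M(H) and N(H) uniformly in all H ≡ G *)
  (exists phiM phiN : formula,
      fv_below 1 phiM /\ fv_below 1 phiN /\
      forall H : group, elem_equiv G H ->
        forall x : H,
          (sat (fun _ => x) phiM <-> MIs H x) /\
          (sat (fun _ => x) phiN <-> NIs H x))
  /\
  (* M(G)/N(G) is a finite abelian quotient *)
  ((forall x : G, NIs G x -> MIs G x) /\
   (exists l : list G, forall m : G, MIs G m ->
       exists r, In r l /\ MIs G r /\ NIs G (gmul (ginv r) m)) /\
   (forall x y : G, MIs G x -> MIs G y -> NIs G (comm x y)))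
  /\
  (* uniform interpretation of the quotient group M(H)/N(H) *)
  (exists dom eqv mul : formula,
      fv_below 1 dom /\ fv_below 2 eqv /\ fv_below 3 mul /\
      forall H : group, elem_equiv G H ->
        (forall x : H, sat (fun _ => x) dom <-> MIs H x) /\
        (forall x y : H, sat (env3 x y gone) eqv <->
            MIs H x /\ MIs H y /\ NIs H (gmul (ginv x) y)) /\
        (forall x y z : H, sat (env3 x y z) mul <->
            MIs H x /\ MIs H y /\ MIs H z /\
            NIs H (gmul (ginv (gmul x y)) z))).
Proof.
  intros G Hfg Hnil.
  destruct (width_thm G Hfg Hnil) as [m Hw].
  assert (HWG : forall x : G, PC (S m) x -> PC m x) by (intros x Hx; apply Hw, (PC_derived (S m)); auto).
  pose proof (derived_PC m HWG) as HDG.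
  destruct (torsion_quot G K1 K1_sub K1_normal K1_comm Hfg) as [L1 [e1 [He1 [HL1 HE1]]]].
  destruct (torsion_quot G (derived G) derived_sub derived_normal derived_comm Hfg) as [L2 [e2 [He2 [_ HE2]]]].
  assert (HTG : forall k (x : G), 1 <= k -> RMsem m k x -> RMsem m e1 x).
  { intros k x Hk Hx. apply RMsem_iff; auto. apply HE1. exists k. split; auto. apply (RMsem_iff m); auto. }
  assert (HUG : forall k (x : G), 1 <= k -> RNsem m k x -> RNsem m e2 x).
  { intros k x Hk Hx. apply RNsem_iff; auto. apply HE2. exists k. split; auto. apply (RNsem_iff m); auto. }
  assert (Hsem : forall H : group, elem_equiv G H ->
    (forall x : H, MIs H x <-> RMsem m e1 x) /\
    (forall x : H, NIs H x <-> exists c, center H c /\ RNsem m e2 (x ** ginv c))).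
  { intros H HGH. apply H_side; auto.
    - apply sat_SW. apply (HGH _ (SW_sent m)). apply sat_SW. auto.
    - intros k x Hk. revert x. apply sat_ST. apply (HGH _ (ST_sent m k e1)). apply sat_ST. intro y; apply (HTG k y Hk).
    - intros k x Hk. revert x. apply sat_SU. apply (HGH _ (SU_sent m k e2)). apply sat_SU. intro y; apply (HUG k y Hk). }
  assert (HsM : forall (H : group) (e : nat -> H) n, n < 3 -> elem_equiv G H ->
     (sat e (RM m e1 (tvar n)) <-> MIs H (e n))).
  { intros H e n Hn HGH. rewrite sem_RM. simpl. symmetry. apply Hsem; auto.
    intros v Hv. apply tvars3 in Hv; auto; lia. }
  assert (HsN : forall (H : group) (e : nat -> H) t, (forall v, tfree t v = true -> v < 3) -> elem_equiv G H ->
     (sat e (PN m e2 t) <-> NIs H (teval e t))).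
  { intros H e t Ht HGH. rewrite sem_PN. symmetry. apply Hsem; auto.
    intros v Hv. apply Ht in Hv; lia. }
  split; [|split].
  - exists (RM m e1 (tvar 0)), (PN m e2 (tvar 0)). split; [|split].
    + intros v Hv. apply ffree_RM, tv0 in Hv. lia.
    + intros v Hv. apply ffree_PN, tv0 in Hv. lia.
    + intros H HGH x. split.
      * apply (HsM H (fun _ => x) 0); auto.
      * apply (HsN H (fun _ => x) (tvar 0)); auto. intros v Hv; apply tvars3 in Hv; lia.
  - split; [|split].
    + intros x [a [c [[k [Hk Ha]] [Hc ->]]]]. exists k. split; auto.
      exists (gpow a k), (gpow c k). split; auto. split.
      * clear Hk Ha. induction k; simpl. apply center_one. apply center_mul; auto.
      * apply gpow_commute. auto.
    + exists L1. intros x Hx. destruct (HL1 x Hx) as [r [Hr [HrM HK]]]. exists r. split; auto. split; auto.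
      destruct HK as [a [c [Ha [Hc Heq]]]]. exists a, c. split; auto.
      exists 1. split; auto. simpl. rewrite mulx1. auto.
    + intros x y _ _. exists (comm x y), gone. split. exists 1. split; auto. simpl. rewrite mulx1. apply derived_comm.
      split. apply center_one. gsolve.
  - exists (RM m e1 (tvar 0)),
      (fand (RM m e1 (tvar 0)) (fand (RM m e1 (tvar 1)) (PN m e2 (tmul (tinv (tvar 0)) (tvar 1))))),
      (fand (RM m e1 (tvar 0)) (fand (RM m e1 (tvar 1)) (fand (RM m e1 (tvar 2))
          (PN m e2 (tmul (tinv (tmul (tvar 0) (tvar 1))) (tvar 2)))))).
    split; [|split; [|split]].
    + intros v Hv. apply ffree_RM, tv0 in Hv. lia.
    + intros v Hv. cbn [ffree] in Hv. eqbs.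
      all: try (apply ffree_RM in Hv; cbn [tfree] in Hv; eqbs; lia).
      apply ffree_PN in Hv. cbn [tfree] in Hv. eqbs; lia.
    + intros v Hv. cbn [ffree] in Hv. eqbs.
      all: try (apply ffree_RM in Hv; cbn [tfree] in Hv; eqbs; lia).
      apply ffree_PN in Hv. cbn [tfree] in Hv. eqbs; lia.
    + intros H HGH. split; [|split].
      * intro x. apply (HsM H (fun _ => x) 0); auto.
      * intros x y. cbn [sat]. rewrite (HsM H _ 0), (HsM H _ 1), HsN; auto. reflexivity.
        intros v Hv. cbn [tfree] in Hv. eqbs; lia.
      * intros x y z. cbn [sat]. rewrite (HsM H _ 0), (HsM H _ 1), (HsM H _ 2), HsN; auto. reflexivity.
        intros v Hv. cbn [tfree] in Hv. eqbs; lia.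
Qed.
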